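(* Let $\mathcal{S}\subset\mathbb{R}^3$ be a smooth, closed, orientable surface and let $\mathcal{R}:\mathcal{S}\to(0,\infty)$ be a smooth radius function. Let $p\in\mathcal{S}$ be a point that contributes to the variable-radius offset surface $\mathcal{S}^{\mathrm{off}}_{\mathcal{R}}$, with corresponding offset point $p^{\mathrm{off}}_{\mathcal{R}}$ and offset direction $\boldsymbol{n}^{\mathrm{off}}_{\mathcal{R}}(p)$, and let $\boldsymbol{n}_p$ be the unit normal of $\mathcal{S}$ at $p$ pointing to the side of the offset layer under consideration. If $\|\nabla\mathcal{R}(p)\|\le 1$, then $\boldsymbol{n}^{\mathrm{off}}_{\mathcal{R}}(p)$ is obtained by rotating $\boldsymbol{n}_p$ by the angle $\alpha=\arcsin(\|\nabla\mathcal{R}(p)\|)$ about the axis $$\frac{\nabla\mathcal{R}(p)}{\|\nabla\mathcal{R}(p)\|}\times\boldsymbol{n}_p .$$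
   Context: $\nabla\mathcal{R}(p)$ denotes the surface (tangential) gradient of $\mathcal{R}$ at $p$. The variable-radius offset surface $\mathcal{S}^{\mathrm{off}}_{\mathcal{R}}$ is the zero level set of $\phi(x)=\min_{q\in\mathcal{S}}\big(\|x-q\|-\mathcal{R}(q)\big)$, i.e. the envelope of the family of balls centered at $q\in\mathcal{S}$ with radius $\mathcal{R}(q)$; it consists of an inward and an outward layer. A point $p\in\mathcal{S}$ contributes to $\mathcal{S}^{\mathrm{off}}_{\mathcal{R}}$ if there is a point $p^{\mathrm{off}}_{\mathcal{R}}\in\mathcal{S}^{\mathrm{off}}_{\mathcal{R}}$ on the sphere of center $p$ and radius $\mathcal{R}(p)$ (a point where this sphere touches the envelope), and the offset direction is the unit vector $\boldsymbol{n}^{\mathrm{off}}_{\mathcal{R}}(p)=(p^{\mathrm{off}}_{\mathcal{R}}-p)/\|p^{\mathrm{off}}_{\mathcal{R}}-p\|$. Rotation about an axis is by the right-hand rule; when $\nabla\mathcal{R}(p)=0$ the angle $\alpha$ is $0$ and the rotation is the identity. *)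

(* Defs.v *)
From HB Require Import structures.
From mathcomp Require Import all_boot all_order all_algebra.
From mathcomp Require Import all_classical all_reals all_analysis.
Set Implicit Arguments. Unset Strict Implicit. Unset Printing Implicit Defensive.
Import Order.TTheory GRing.Theory Num.Theory.
Import numFieldNormedType.Exports.
Local Open Scope classical_set_scope.
Local Open Scope ring_scope.

Section OffsetDefs.
Variable R : realType.

Notation vec3 := 'rV[R]_3.

Definition dot (u v : vec3) : R := \sum_(i < 3) u 0 i * v 0 i.
Definition enorm (u : vec3) : R := Num.sqrt (dot u u).
Definition cross (u v : vec3) : vec3 :=
  let c := fun (w : vec3) (k : nat) => w 0 (inord k) in
  \row_(i < 3) (match (val i)%N with
                | O => c u 1 * c v 2 - c u 2 * c v 1
                | S O => c u 2 * c v 0 - c u 0 * c v 2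
                | _ => c u 0 * c v 1 - c u 1 * c v 0 end).

Definition ebase (i : 'I_3) : vec3 := \row_(j < 3) (if j == i then 1 else 0).

Fixpoint iterD (vs : seq vec3) (f : vec3 -> R) : vec3 -> R :=
  match vs with
  | [::] => f
  | v :: vs' => fun x => derive (iterD vs' f) x v
  end.

Definition smooth (f : vec3 -> R) : Prop :=
  forall (vs : seq vec3) (x : vec3), differentiable (iterD vs f) x.

Definition grad (f : vec3 -> R) (x : vec3) : vec3 :=
  \row_(i < 3) derive f x (ebase i).

(** Smooth closed orientable surface, presented as a compact regular
    level set S = F^{-1}(0) of a smooth F : R^3 -> R. *)
Definition regular_compact_level_set (F : vec3 -> R) : Prop :=
  [/\ smooth F,
      (forall x, F x = 0 -> grad F x != 0) &
      compact [set x | F x = 0]].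

Definition unormal (F : vec3 -> R) (p : vec3) : vec3 :=
  (enorm (grad F p))^-1 *: grad F p.

(** Surface (tangential) gradient at p of a function on S, given through a
    smooth extension Rad : R^3 -> R: projection of the ambient gradient on
    the tangent plane (independent of the extension). *)
Definition surf_grad (F Rad : vec3 -> R) (p : vec3) : vec3 :=
  grad Rad p - dot (grad Rad p) (unormal F p) *: unormal F p.

(** phi(x) = min_{q in S} (|x - q| - Rad(q)) (the min exists by compactness;
    we write it as an infimum). *)
Definition offset_phi (F Rad : vec3 -> R) (x : vec3) : R :=
  inf [set enorm (x - q) - Rad q | q in [set q | F q = 0]].

Definition offset_surface (F Rad : vec3 -> R) : set vec3 :=
  [set x | offset_phi F Rad x = 0].

Definition offset_dir (p poff : vec3) : vec3 :=
  (enorm (poff - p))^-1 *: (poff - p).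

(** Right-hand rotation of v by angle a about the axis spanned by [axis]
    (Rodrigues' formula with the normalized axis); identity if axis = 0. *)
Definition rotate (axis : vec3) (a : R) (v : vec3) : vec3 :=
  if axis == 0 then v else
  let k := (enorm axis)^-1 *: axis in
  cos a *: v + sin a *: cross k v + ((1 - cos a) * dot k v) *: k.

End OffsetDefs.

(* Main.v *)
Require Import Defs.
From HB Require Import structures.
From mathcomp Require Import all_boot all_order all_algebra.
From mathcomp Require Import all_classical all_reals all_analysis.
From mathcomp Require Import ring lra.
Import Order.TTheory GRing.Theory Num.Theory.
Import numFieldNormedType.Exports.
Local Open Scope classical_set_scope.
Local Open Scope ring_scope.

Section S.
Variable R : realType.
Notation vec3 := 'rV[R]_3.
Let i0 : 'I_3 := @Ordinal 3 0 isT.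
Let i1 : 'I_3 := @Ordinal 3 1 isT.
Let i2 : 'I_3 := @Ordinal 3 2 isT.

Lemma dotE (u v : vec3) : dot u v = u 0 i0 * v 0 i0 + u 0 i1 * v 0 i1 + u 0 i2 * v 0 i2.
Proof.
rewrite /dot !big_ord_recr big_ord0 /= add0r.
have -> : (@ord_max 2) = i2 by apply: val_inj.
have -> : (widen_ord (leqnSn 2) ord_max) = i1 by apply: val_inj.
have -> : (widen_ord (leqnSn 2) (widen_ord (leqnSn 1) ord_max)) = i0 by apply: val_inj.
by [].
Qed.

Lemma vecP (u v : vec3) : u 0 i0 = v 0 i0 -> u 0 i1 = v 0 i1 -> u 0 i2 = v 0 i2 -> u = v.
Proof.
move=> h0 h1 h2; apply/rowP => -[[|[|[|//]]] Hi].
- by have -> : Ordinal Hi = i0 by apply: val_inj.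
- by have -> : Ordinal Hi = i1 by apply: val_inj.
- by have -> : Ordinal Hi = i2 by apply: val_inj.
Qed.

Lemma crossE (u v : vec3) :
  [/\ cross u v 0 i0 = u 0 i1 * v 0 i2 - u 0 i2 * v 0 i1,
      cross u v 0 i1 = u 0 i2 * v 0 i0 - u 0 i0 * v 0 i2 &
      cross u v 0 i2 = u 0 i0 * v 0 i1 - u 0 i1 * v 0 i0].
Proof.
have e0 : inord 0 = i0 by apply: val_inj; rewrite /= inordK.
have e1 : inord 1 = i1 by apply: val_inj; rewrite /= inordK.
have e2 : inord 2 = i2 by apply: val_inj; rewrite /= inordK.
by rewrite /cross !mxE /= e0 e1 e2.
Qed.

Lemma dot_ge0 (u : vec3) : 0 <= dot u u.
Proof. by rewrite dotE; nra. Qed.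

Lemma dot0 (u : vec3) : dot u u = 0 -> u = 0.
Proof. rewrite dotE => h; apply: vecP; rewrite mxE; nra. Qed.

Lemma dotZl (k : R) (a b : vec3) : dot (k *: a) b = k * dot a b.
Proof. rewrite !dotE !mxE; ring. Qed.
Lemma dotZr (k : R) (a b : vec3) : dot a (k *: b) = k * dot a b.
Proof. rewrite !dotE !mxE; ring. Qed.
Lemma dotDl (a b c : vec3) : dot (a + b) c = dot a c + dot b c.
Proof. rewrite !dotE !mxE; ring. Qed.
Lemma dotBl (a b c : vec3) : dot (a - b) c = dot a c - dot b c.
Proof. rewrite !dotE !mxE; ring. Qed.
Lemma dotBB (a b : vec3) : dot (a - b) (a - b) = dot a a - 2 * dot a b + dot b b.
Proof. rewrite !dotE !mxE /=; ring. Qed.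
Lemma dotC (a b : vec3) : dot a b = dot b a.
Proof. rewrite !dotE; ring. Qed.
Lemma cross0l (b : vec3) : cross 0 b = 0.
Proof. by have [h0 h1 h2] := crossE 0 b; apply: vecP; rewrite ?h0 ?h1 ?h2 !mxE; ring. Qed.
Lemma dot_cross_r (a b : vec3) : dot (cross a b) b = 0.
Proof. by have [h0 h1 h2] := crossE a b; rewrite dotE h0 h1 h2; ring. Qed.
Lemma cross_cross (a b : vec3) : cross (cross a b) b = dot a b *: b - dot b b *: a.
Proof.
have [h0 h1 h2] := crossE a b; have [k0 k1 k2] := crossE (cross a b) b.
by apply: vecP; rewrite ?k0 ?k1 ?k2 ?h0 ?h1 ?h2 !mxE !dotE; ring.
Qed.
Lemma lagrange (a b : vec3) :
  dot (cross a b) (cross a b) = dot a a * dot b b - dot a b ^+ 2.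
Proof. by have [h0 h1 h2] := crossE a b; rewrite !dotE h0 h1 h2; ring. Qed.

Lemma enorm_sq (a : vec3) : enorm a ^+ 2 = dot a a.
Proof. by rewrite /enorm sqr_sqrtr // dot_ge0. Qed.

Lemma dot00 : dot (0 : vec3) 0 = 0.
Proof. by rewrite -(scale0r (0 : vec3)) dotZl mul0r. Qed.

Lemma final_alg (N D G n g : vec3) (r s : R) :
  n = (enorm N)^-1 *: N -> g = G - dot G n *: n ->
  N != 0 -> 0 < r -> dot D D = r ^+ 2 -> (s = 1 \/ s = -1) ->
  (forall v, dot v N = 0 -> dot (D + r *: G) v = 0) ->
  0 <= dot (s *: n) D -> enorm g <= 1 ->
  (enorm D)^-1 *: D =
   rotate (cross ((enorm g)^-1 *: g) (s *: n)) (asin (enorm g)) (s *: n).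
Proof.
move=> hn hg N0 r0 DD hs Hv hside hg1.
have m0 : dot N N != 0 by apply/eqP => /dot0 /eqP; rewrite (negbTE N0).
have eN : enorm N != 0.
  by rewrite /enorm gt_eqF // sqrtr_gt0 lt_neqAle eq_sym m0 dot_ge0.
have nn : dot n n = 1.
  by rewrite hn dotZl dotZr -enorm_sq; field.
have Nn : N = enorm N *: n by rewrite hn scalerA mulfV // scale1r.
set l := dot (D + r *: G) n.
have hD : D + r *: G = l *: n.
  set v0 := D + r *: G - l *: n.
  have v0n : dot v0 n = 0 by rewrite /v0 dotBl dotZl nn mulr1 subrr.
  have v0N : dot v0 N = 0 by rewrite Nn dotZr v0n mulr0.
  have h1 := Hv v0 v0N.
  have : dot v0 v0 = 0.
    by rewrite {1}/v0 dotBl h1 dotZl dotC v0n mulr0 subrr.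
  by move/dot0/eqP; rewrite subr_eq0 => /eqP.
have gn : dot g n = 0 by rewrite hg dotBl dotZl nn mulr1 subrr.
set c0 := l / r - dot G n.
have rn0 : r != 0 by rewrite gt_eqF.
have hd : r^-1 *: D = c0 *: n - g.
  have -> : D = l *: n - r *: G by rewrite -hD addrK.
  by rewrite hg /c0; apply: vecP; rewrite !mxE; field.
have eD : enorm D = r by rewrite /enorm DD sqrtr_sqr gtr0_norm.
transitivity (r^-1 *: D); first by rewrite eD.
rewrite hd.
have gc : dot g g + c0 ^+ 2 = 1.
  have : dot (r^-1 *: D) (r^-1 *: D) = 1 by rewrite dotZl dotZr DD; field.
  rewrite hd dotBB !dotZl dotZr nn (dotC n g) gn; move=> <-; ring.
set γ := enorm g.
have γ2 : γ ^+ 2 = dot g g by exact: enorm_sq.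
have γ0 : 0 <= γ by exact: sqrtr_ge0.
have sc : 0 <= s * c0.
  have eD2 : D = r *: (c0 *: n - g) by rewrite -hd scalerA mulfV // scale1r.
  move: hside; rewrite eD2 dotZl dotZr (dotC n) dotBl dotZl nn gn.
  rewrite mulr1 subr0 => h.
  have : s * (r * c0) = r * (s * c0) by ring.
  move=> e; rewrite e pmulr_rge0 // in h.
have ss : s * s = 1 by case: hs => ->; ring.
have hc0 : c0 = s * Num.sqrt (1 - γ ^+ 2).
  have e1 : 1 - γ ^+ 2 = (s * c0) ^+ 2.
    have e2 : (s * c0) ^+ 2 = (s * s) * c0 ^+ 2 by ring.
    by rewrite e2 ss mul1r γ2 -gc; ring.
  have : Num.sqrt (1 - γ ^+ 2) = s * c0 by rewrite e1 sqrtr_sqr ger0_norm.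
  move=> ->; rewrite mulrA ss mul1r //.
have γle : -1 <= γ <= 1 by apply/andP; split => //; lra.
case: (eqVneq g 0) => [g0 | gnz].
  have γz : γ = 0 by rewrite /γ /enorm g0 dot00 sqrtr0.
  rewrite g0 scaler0 cross0l /rotate eqxx hc0 γz expr0n /= subr0 subr0.
  by rewrite sqrtr1 mulr1.
have γnz : γ != 0.
  apply/eqP => h; move: gnz; rewrite -γ2 in gc.
  have : dot g g = 0 by rewrite -γ2 h expr0n.
  by move/dot0 => ->; rewrite eqxx.
set gh := γ^-1 *: g. set np := s *: n.
have ghgh : dot gh gh = 1 by rewrite dotZl dotZr -γ2; field.
have ghnp : dot gh np = 0 by rewrite dotZl dotZr gn !mulr0.
have npnp : dot np np = 1 by rewrite dotZl dotZr nn mulr1.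
set k := cross gh np.
have kk : dot k k = 1 by rewrite lagrange ghgh npnp ghnp; ring.
have k0 : k != 0 by apply/eqP => k0; move: kk; rewrite k0 dot00 => /eqP; rewrite eq_sym oner_eq0.
have ek : enorm k = 1 by rewrite /enorm kk sqrtr1.
rewrite /rotate (negbTE k0) ek invr1 scale1r cross_cross dot_cross_r mulr0 scale0r addr0.
rewrite ghnp npnp (cos_asin γle) (asinK γle) ?in_itv //= hc0 /gh /np.
by apply: vecP; rewrite !mxE; field.
Qed.

Lemma entry_le (x : vec3) i : `|x 0 i| <= `|x|.
Proof.
change (`|x 0 i| <= mx_norm x); rewrite mx_normrE.
exact: (le_bigmax _ (fun ij : 'I_1 * 'I_3 => `|x ij.1 ij.2|) (0, i)).
Qed.

Lemma sq_le_norm (w : vec3) i : w 0 i * w 0 i <= `|w| ^+ 2.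
Proof.
have h := entry_le w i; have h' := normr_ge0 (w 0 i).
have e : w 0 i * w 0 i = `|w 0 i| ^+ 2 by rewrite real_normK ?num_real // expr2.
rewrite e; nra.
Qed.

Lemma dot_le3 (w : vec3) : dot w w <= 3 * `|w| ^+ 2.
Proof.
rewrite dotE.
have := sq_le_norm w i0; have := sq_le_norm w i1; have := sq_le_norm w i2.
lra.
Qed.

Lemma diff_dot (f : vec3 -> R) x : differentiable f x ->
  forall h, 'd f x h = dot h (grad f x).
Proof.
move=> df h.
rewrite {1}(_ : h = \sum_(i < 3) h 0 i *: ebase R i); last first.
  apply/rowP => j; rewrite summxE (bigD1 j) //= big1 ?addr0.
    by rewrite !mxE eqxx mulr1.
  by move=> i /negbTE ij; rewrite !mxE eq_sym ij mulr0.
rewrite linear_sum /dot; apply: eq_bigr => i _.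
rewrite linearZ /= /grad !mxE -deriveE //.
Qed.

Lemma diff_eps (f : vec3 -> R) x : differentiable f x -> forall e : R, 0 < e ->
  exists2 d : R, 0 < d & forall h : vec3, `|h| < d -> `|f (h + x) - f x - 'd f x h| <= e * `|h|.
Proof.
move=> /diff_locally H e e0.
have := H; move/eqaddoP => /(_ e e0).
rewrite nearE => /nbhs_ballP [d d0 Hd].
exists d => // h hd.
have : ball 0 d h by rewrite -ball_normE /ball_ /= sub0r normrN.
move=> /Hd; by rewrite /= opprD addrA.
Qed.

Lemma dot_gt0 (u : vec3) : u != 0 -> 0 < dot u u.
Proof.
move=> u0; rewrite lt_neqAle dot_ge0 andbT eq_sym; apply/negP => /eqP.
rewrite dotE => h; move/negP: u0; apply; apply/eqP.
apply: vecP; rewrite mxE; nra.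
Qed.

Lemma dot_lin (a b X : vec3) (s t : R) : dot (s *: a + t *: b) X = s * dot a X + t * dot b X.
Proof. rewrite !dotE !mxE /=; ring. Qed.

Lemma dot_lin2 (D G v N : vec3) (t u r : R) :
  dot D (t *: v + u *: N) + r * dot (t *: v + u *: N) G =
  t * dot (D + r *: G) v + u * dot (D + r *: G) N.
Proof. rewrite !dotE !mxE /=; ring. Qed.

Lemma fin_arith (r X wG Dw ww a0 t c e B A W: R) :
 0 < r -> 0 < t -> t <= e -> 0 <= A -> 0 <= B ->
 X^+2 <= r^+2 - 2*Dw + ww -> ww <= 3 * W^+2 -> W^+2 <= (t*B)^+2 ->
 -(e*t*B) <= X - r - wG -> Dw + r*wG = t*c + a0 -> -(e*t*A) <= a0 ->
 c <= e * (A + 2*B^+2 + r*B).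
Proof.
move=> r0 t0 te A0 B0 h2 h3 h3' h1 El h5.
have hsq : r ^+ 2 + 2 * (r * (X - r)) <= X ^+ 2.
  have := sqr_ge0 (X - r). have -> : (X - r) ^+ 2 = X^+2 - 2 * (r * (X - r)) - r^+2 by ring.
  lra.
have hC : r * (-(e * t * B)) <= r * (X - r - wG) by apply: ler_wpM2l; lra.
have hE : r * (-(e * t * B)) = - (r * (e * t * B)) by ring.
have hD : r * (X - r - wG) = r * (X - r) - r * wG by ring.
have h6 : 2 * (t * c + a0) <= 3 * (t * B) ^+ 2 + 2 * (r * (e * t * B)) by lra.
have h8 : t * t * B ^+ 2 <= t * e * B ^+ 2 by apply: ler_wpM2r; [exact: sqr_ge0 | apply: ler_wpM2l; lra].
have h9 : t * c <= t * (e * (A + 2*B^+2 + r*B)).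
  have -> : t * (e * (A + 2*B^+2 + r*B)) = e * t * A + 2 * (t * e * B^+2) + r * (e * t * B) by ring.
  have eq1 : (t * B) ^+ 2 = t * t * B ^+ 2 by ring.
  rewrite eq1 in h6.
  have : 0 <= t * e * B ^+ 2 by apply: mulr_ge0; [apply: mulr_ge0; lra | exact: sqr_ge0].
  lra.
by rewrite ler_pM2l in h9.
Qed.
Lemma sq_le (X S Y : R) : 0 < X -> X <= S -> S ^+ 2 = Y -> X ^+ 2 <= Y.
Proof. move=> X0 XS <-; rewrite lerXn2r ?nnegrE //; lra. Qed.
Lemma key (F Rad : vec3 -> R) (p poff : vec3) :
  (forall x, differentiable F x) -> differentiable Rad p ->
  F p = 0 -> grad F p != 0 ->
  (forall q, F q = 0 -> 0 < Rad q /\ Rad q <= enorm (poff - q)) ->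
  enorm (poff - p) = Rad p ->
  forall v, dot v (grad F p) = 0 -> dot (poff - p + Rad p *: grad Rad p) v <= 0.
Proof.
move=> dF dR Fp N0 Hq Hsph v vN.
set N := grad F p in N0 vN *. set D := poff - p in Hsph *. set r := Rad p in Hsph *.
set G := grad Rad p. set c := dot (D + r *: G) v.
have m0 : 0 < dot N N by apply: dot_gt0.
set m := dot N N in m0.
have B0 : 0 < `|v| + `|N| by have := normr_ge0 v; rewrite -normr_gt0 in N0; lra.
set B := `|v| + `|N| in B0.
have B20 : 0 < 2 * B by apply: mulr_gt0.
set A := `|dot (D + r *: G) N|.
have A0 : 0 <= A by apply: normr_ge0.
have r0 : 0 < r by case: (Hq p Fp).
have DD : dot D D = r ^+ 2.
  by rewrite -Hsph /enorm sqr_sqrtr // dot_ge0.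
set K := A + 2 * B ^+ 2 + r * B.
have K0 : 0 <= K.
  by rewrite /K; apply: addr_ge0; [apply: addr_ge0 => //; apply: mulr_ge0 => //; exact: sqr_ge0|
     apply: mulr_ge0; exact: ltW].
suff main : forall e : R, 0 < e -> e <= 1 -> c <= e * K.
  rewrite leNgt; apply/negP => c0.
  have K1 : 0 < 2 * (K + 1) by apply: mulr_gt0 => //; lra.
  pose e := Num.min 1 (c / (2 * (K + 1))).
  have e0 : 0 < e by rewrite lt_min ltr01 divr_gt0.
  have e1 : e <= 1 by rewrite ge_min lexx.
  have e2 : e * (2 * (K + 1)) <= c.
    by rewrite -ler_pdivlMr // ge_min lexx orbT.
  have := main e e0 e1.
  have : e * K <= e * (K + 1) by rewrite ler_pM2l //; lra.
  have : e * (2 * (K + 1)) = 2 * (e * (K + 1)) by ring.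
  lra.
move=> e e0 e1.
have e10 : 0 < e * m / (2 * B) by apply: divr_gt0 => //; apply: mulr_gt0.
have [d1 d10 H1] := diff_eps _ _ (dF p) _ e10.
have [d2 d20 H2] := diff_eps _ _ dR _ e0.
set t := Num.min e (Num.min (d1 / (2 * B)) (d2 / (2 * B))).
have t0 : 0 < t by rewrite !lt_min e0 !divr_gt0.
have te : t <= e by rewrite /t ge_min lexx.
have tB1 : t * B < d1.
  have : t <= d1 / (2 * B) by rewrite /t !ge_min lexx orbT.
  rewrite ler_pdivlMr // => h.
  have : t * B < t * (2 * B) by rewrite ltr_pM2l // ltr_pMl // ltr1n.
  lra.
have tB2 : t * B < d2.
  have : t <= d2 / (2 * B) by rewrite /t !ge_min lexx !orbT.
  rewrite ler_pdivlMr // => h.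
  have : t * B < t * (2 * B) by rewrite ltr_pM2l // ltr_pMl // ltr1n.
  lra.
have wB : forall u : R, `|u| <= e * t -> `|t *: v + u *: N| <= t * B.
  move=> u hu; apply: (le_trans (ler_normD _ _)); rewrite !normrZ (gtr0_norm t0).
  have ut : `|u| <= t.
    by apply: (le_trans hu); rewrite ler_piMl // ltW.
  have := normr_ge0 N; rewrite /B => Nn.
  have : `|u| * `|N| <= t * `|N| by apply: ler_wpM2r.
  lra.
have Fw : forall u : R, `|u| <= e * t ->
    `|F (t *: v + u *: N + p) - u * m| <= e * m / (2 * B) * (t * B).
  move=> u hu; have hw := wB u hu.
  have := H1 _ (le_lt_trans hw tB1); rewrite Fp subr0 diff_dot // -/N dot_lin vN -/m mulr0 add0r.
  move/le_trans; apply; apply: ler_wpM2l => //; exact: ltW.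
pose phi := fun u : R => F (t *: v + u *: N + p).
have phic : {within `[- (e * t), e * t], continuous phi}.
  apply: continuous_subspaceT => u.
  apply: continuous_comp; last exact: differentiable_continuous.
  apply: continuousD; last exact: cst_continuous.
  apply: continuousD; first exact: cst_continuous.
  apply: continuousZr_tmp; exact: cvg_id.
have et0 : 0 < e * t by apply: mulr_gt0.
have EE : e * m / (2 * B) * (t * B) = e * t * m / 2.
  by field; apply/eqP; rewrite ?mulf_neq0 ?gt_eqF //; lra.
have mt0 : 0 < e * t * m by apply: mulr_gt0.
have phib : 0 < phi (e * t).
  have := Fw (e * t); rewrite gtr0_norm // lexx EE => /(_ isT).
  rewrite /phi ler_norml => /andP [h _]; lra.
have phia : phi (- (e * t)) < 0.
  have := Fw (- (e * t)); rewrite normrN gtr0_norm // lexx EE => /(_ isT).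
  rewrite /phi ler_norml => /andP [_ h]; lra.
have [u ui phiu] : exists2 u, u \in `[- (e * t), e * t] & phi u = 0.
  apply: IVT => //; first lra.
  rewrite ge_min le_max; apply/andP; split; apply/orP; [left|right]; lra.
have hu : `|u| <= e * t.
  by move: ui; rewrite in_itv /= ler_norml => /andP [-> ->].
set w := t *: v + u *: N.
have [Rq0 Rqle] := Hq (w + p) phiu.
have hwB := wB u hu.
have hrho := H2 w (le_lt_trans hwB tB2).
rewrite diff_dot // -/G -/r in hrho.
have Ew : poff - (w + p) = D - w by rewrite opprD addrA addrAC.
rewrite Ew /enorm in Rqle.
have sq := sqr_sqrtr (dot_ge0 (D - w)).
set X := Rad (w + p) in Rq0 Rqle hrho.
have h2 := sq_le _ _ _ Rq0 Rqle sq.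
have Eexp := dotBB D w.
rewrite Eexp DD in h2.
have h3 := dot_le3 w.
have h3' : `|w| ^+ 2 <= (t * B) ^+ 2.
  by rewrite lerXn2r // nnegrE ?normr_ge0 //; apply: mulr_ge0; exact: ltW.
have Elin : dot D w + r * dot w G = t * c + u * dot (D + r *: G) N.
  exact: dot_lin2.
have h5 : `|u * dot (D + r *: G) N| <= e * t * A.
  by rewrite normrM /A; apply: ler_wpM2r.
have hw0 := normr_ge0 w.
have h1 : `|X - r - dot w G| <= e * t * B.
  by apply: (le_trans hrho); rewrite -mulrA; apply: ler_wpM2l => //; exact: ltW.
move: h1 h5; rewrite !ler_norml => /andP [h1a h1b] /andP [h5a h5b].
exact: (fin_arith _ _ _ _ _ _ _ _ _ _ _ _ r0 t0 te A0 (ltW B0) h2 h3 h3' h1a Elin h5a).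
Qed.

Lemma dotNr (a b : vec3) : dot a (- b) = - dot a b.
Proof. rewrite !dotE !mxE; ring. Qed.

End S.

Theorem theorem1 (R : realType) (F Rad : 'rV[R]_3 -> R)
  (HS : regular_compact_level_set F)
  (HRad : smooth Rad) (Hpos : forall q, F q = 0 -> 0 < Rad q)
  (p poff : 'rV[R]_3) (Hp : F p = 0)
  (Hoff : poff \in offset_surface F Rad)
  (Hsph : enorm (poff - p) = Rad p)
  (s : R) (Hs : s = 1 \/ s = -1)
  (Hside : 0 <= dot (s *: unormal F p) (poff - p))
  (Hgrad : enorm (surf_grad F Rad p) <= 1) :
  let np := s *: unormal F p in
  let g := surf_grad F Rad p in
  offset_dir p poff =
    rotate (cross ((enorm g)^-1 *: g) np) (asin (enorm g)) np.
Proof.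
move=> np g.
have [sF NF cS] := HS.
have dF : forall x, differentiable F x := fun x => sF [::] x.
have dR : forall x, differentiable Rad x := fun x => HRad [::] x.
have N0 := NF p Hp.
have Hq : forall q, F q = 0 -> 0 < Rad q /\ Rad q <= enorm (poff - q).
  move=> q Fq; split; first exact: Hpos.
  have cR : {within [set x | F x = 0], continuous Rad}.
    by apply: continuous_subspaceT => x; exact: differentiable_continuous.
  have bnd := compact_bounded (continuous_compact cR cS).
  case: bnd => M [_ HM].
  have HM1 : forall q', F q' = 0 -> Rad q' <= M + 1.
    move=> q' Fq'.
    have : `|Rad q'| <= M + 1 by apply: (HM (M + 1)); [rewrite ltrDl ltr01 | exists q'].
    by move/ler_normlW.
  set E := [set enorm (poff - q0) - Rad q0 | q0 in [set x | F x = 0]].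
  have lb : has_lbound E.
    exists (- (M + 1)) => _ [q' Fq' <-].
    have := HM1 q' Fq'; have := sqrtr_ge0 (dot (poff - q') (poff - q')).
    rewrite /enorm; lra.
  have := ge_inf lb.
  move: Hoff; rewrite inE /offset_surface /offset_phi /= => ->.
  move=> /(_ (enorm (poff - q) - Rad q)) H.
  have := H (ex_intro2 _ _ q Fq erefl); lra.
have r0 : 0 < Rad p := Hpos p Hp.
have K := key _ F Rad p poff dF (dR p) Hp N0 Hq Hsph.
have Hv : forall v, dot v (grad F p) = 0 ->
    dot (poff - p + Rad p *: grad Rad p) v = 0.
  move=> v hv; apply/eqP; rewrite eq_le K //=.
  have hv' : dot (- v) (grad F p) = 0.
    by rewrite dotC dotNr dotC hv oppr0.
  by have := K _ hv'; rewrite dotNr oppr_le0.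
have DD : dot (poff - p) (poff - p) = Rad p ^+ 2 by rewrite -enorm_sq Hsph.
exact: (final_alg _ (grad F p) (poff - p) (grad Rad p) (unormal F p)
  (surf_grad F Rad p) (Rad p) s erefl erefl N0 r0 DD Hs Hv Hside Hgrad).
Qed.
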